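(* Let $k\ge2$ be even, let $p\ge2$ be an integer, and let $G=C(p,p,\dots,p)$ ($k$ entries, all equal to $p$). Then the number $m(G)$ of distinct Laplacian eigenvalues of $G$ equals $k+1$.
   Context: $C(\alpha_1,\dots,\alpha_k)$ is defined recursively by $C(\alpha_1)=\overline{K_{\alpha_1}}$ (edgeless graph) and $C(\alpha_1,\dots,\alpha_i)=\overline{C(\alpha_1,\dots,\alpha_{i-1})\cup K_{\alpha_i}}$ for $i=2,\dots,k$ (disjoint union, then complement). Equivalently for $k$ even, with $\pi_i$ the $\alpha_i$ vertices introduced at step $i$: $\pi_i$ is a clique for $i$ odd, independent for $i$ even, and for $i<j$ vertices of $\pi_i,\pi_j$ are adjacent iff $j$ is even. Laplacian eigenvalues are those of $L=D-A$. *)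

(* Defs.v *)
From HB Require Import structures.
From mathcomp Require Import all_boot all_order all_algebra all_field.
Set Implicit Arguments. Unset Strict Implicit. Unset Printing Implicit Defensive.
Import Order.TTheory GRing.Theory Num.Theory.
Local Open Scope ring_scope.

(* Cadj rs : adjacency of C(alpha_1,...,alpha_k) where rs = rev alpha
   = [:: alpha_k; ...; alpha_1].  The vertices introduced at step i are
   numbered sumn [alpha_1..alpha_{i-1}] .. sumn [alpha_1..alpha_i] - 1.
   Step i: complement of (previous graph  disjoint-union  K_{alpha_i}),
   with the new clique on the vertices n .. n+alpha_i-1, n = sumn(previous).
   For the first step (previous graph empty, n = 0) this gives the complement
   of K_{alpha_1}, i.e. the edgeless graph, as in the definition. *)
Fixpoint Cadj (rs : seq nat) (u v : nat) : bool :=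
  match rs with
  | [::] => false
  | a :: rs' =>
      let n := sumn rs' in
      (u != v) && ~~ ([&& (u < n)%N, (v < n)%N & Cadj rs' u v] || ((n <= u)%N && (n <= v)%N))
  end.

Definition C_adj (alpha : seq nat) (u v : 'I_(sumn alpha)) : bool :=
  Cadj (rev alpha) u v.

Definition laplacian (n : nat) (adj : 'I_n -> 'I_n -> bool) : 'M[algC]_n :=
  \matrix_(i, j) (if i == j then (#|[set j0 | adj i j0]|)%:R
                  else - ((adj i j : nat)%:R)).

Definition C_laplacian (alpha : seq nat) : 'M[algC]_(sumn alpha) :=
  laplacian (@C_adj alpha).

Definition num_distinct_eigenvalues (n : nat) (A : 'M[algC]_n) (m : nat) : Prop :=
  exists s : seq algC, [/\ uniq s, (forall a, eigenvalue A a = (a \in s)) & size s = m].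

(* Main.v *)
From HB Require Import structures.
From mathcomp Require Import all_boot all_order all_algebra all_field.
From mathcomp Require Import zify ring.
Require Import Defs.
Set Implicit Arguments. Unset Strict Implicit. Unset Printing Implicit Defensive.
Import Order.TTheory GRing.Theory Num.Theory.

Lemma Cadj_char m p u v : (0 < p)%N -> (u < m * p)%N -> (v < m * p)%N ->
  Cadj (nseq m p) u v = (u != v) && (odd (m - maxn (u %/ p) (v %/ p))%N (+) (u %/ p == v %/ p)).
Proof.
move=> p0; elim: m => [|m IH] hu hv; first by rewrite mul0n in hu.
rewrite /= sumn_nseq.
have divlt : forall w, w < m * p -> w %/ p < m by move=> w hw; rewrite ltn_divLR.
have diveq : forall w, m * p <= w -> w < m.+1 * p -> w %/ p = m.
  move=> w h1 h2; apply/eqP; rewrite eqn_leq -ltnS ltn_divLR // h2 leq_divRL //.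
case: (ltnP u (p * m)) => hu'; case: (ltnP v (p * m)) => hv' /=.
- rewrite mulnC in hu' hv'; rewrite IH //.
  have := divlt _ hu'; have := divlt _ hv' => a b.
  case: (u != v) => //=.
  have hM : maxn (u %/ p) (v %/ p) < m by rewrite gtn_max a b.
  rewrite subSn; last by apply: ltnW.
  by rewrite /=; case: (odd _); case: (_ == _).
- rewrite mulnC in hu' hv'; rewrite (diveq v) //.
  have a := divlt _ hu'; rewrite (maxn_idPr (ltnW a)) subSnn /= (ltn_eqF a) /=.
  by case: (u != v).
- rewrite mulnC in hu' hv'; rewrite (diveq u) //.
  have a := divlt _ hv'; rewrite (maxn_idPl (ltnW a)) subSnn /= (gtn_eqF a) /=.
  by case: (u != v).
- rewrite mulnC in hu' hv'; rewrite (diveq u) // (diveq v) // maxnn subSnn eqxx /=.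
  by rewrite andbF.
Qed.

Local Open Scope ring_scope.

Lemma Cadj_sym rs u v : Cadj rs u v = Cadj rs v u.
Proof. elim: rs => //= a rs IH; rewrite eq_sym IH; by case: (u < sumn rs)%N; case: (v < sumn rs)%N; case: (sumn rs <= u)%N; case: (sumn rs <= v)%N. Qed.

Lemma Cadj_irr rs u : Cadj rs u u = false.
Proof. by case: rs => //= a rs; rewrite eqxx. Qed.

Lemma deg_sum n (a : 'I_n -> bool) :
  (#|[set j0 | a j0]|)%:R = \sum_i ((a i : nat)%:R : algC).
Proof.
rewrite cardsE -sum1_card natr_sum big_mkcond /=; apply: eq_bigr => i _; rewrite unfold_in.
by case: (a i).
Qed.

Lemma Lmul (alpha : seq nat) (F : nat -> algC) (j : 'I_(sumn alpha)) :
  ((\row_i F (val i)) *m C_laplacian alpha) 0 j =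
  \sum_(i < sumn alpha) ((C_adj i j : nat)%:R) * (F j - F i).
Proof.
rewrite /C_laplacian /laplacian mxE (bigD1 j) //= !mxE eqxx deg_sum.
rewrite [X in _ = X](bigD1 j) //= /C_adj Cadj_irr mul0r add0r.
under [X in _ + X = _]eq_bigr => i hi do rewrite !mxE (negbTE hi) mulrN.
under [X in _ = X]eq_bigr => i hi do rewrite mulrBr.
rewrite big_split /= sumrN.
rewrite [X in F j * X](bigD1 j) //= Cadj_irr add0r mulr_sumr.
rewrite sumrN; congr (_ - _); [apply: eq_bigr => i _; rewrite Cadj_sym mulrC //|].
by apply: eq_bigr => i _; rewrite mulrC.
Qed.

Definition gadj (g h : nat) : bool := odd (maxn g h) (+) (g == h).

Lemma gadj_sym g h : gadj g h = gadj h g.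
Proof. by rewrite /gadj maxnC eq_sym. Qed.

Definition Q (m : nat) (c : nat -> algC) (h : nat) : algC :=
  \sum_(0 <= g < m) (gadj g h)%:R * (c h - c g).

Lemma Q_sum0 m c : \sum_(0 <= h < m) Q m c h = 0.
Proof.
rewrite /Q.
under eq_bigr => h _ do (under eq_bigr => g _ do rewrite mulrBr; rewrite sumrB).
rewrite sumrB exchange_big_nat /=; apply/eqP; rewrite subr_eq0; apply/eqP.
by apply: eq_bigr => h _; apply: eq_bigr => g _; rewrite gadj_sym.
Qed.

Lemma Q_rec M c h : ~~ odd M -> (h < M)%N ->
  Q M.+2 c h = Q M c h + (c h - c M.+1).
Proof.
move=> eM hM; rewrite /Q !big_nat_recr //=.
have e1 : gadj M h = false.
  rewrite /gadj (_ : maxn M h = M) ?(negbTE eM) ?(gtn_eqF hM) //; lia.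
have e2 : gadj M.+1 h = true.
  rewrite /gadj (_ : maxn M.+1 h = M.+1) /= ?eM ?(gtn_eqF (ltnW hM)) //; lia.
by rewrite e1 e2 mul0r addr0 mul1r.
Qed.

Lemma Q_top M c : ~~ odd M -> \sum_(0 <= h < M.+2) c h = 0 -> Q M.+2 c M.+1 = (M.+2)%:R * c M.+1.
Proof.
move=> eM s0; rewrite /Q.
rewrite (eq_big_nat _ _ (F2 := fun g => c M.+1 - c g)); last first.
  move=> g /andP[_ hg]; case: (ltngtP g M.+1) => hg'.
  - rewrite /gadj (_ : maxn g M.+1 = M.+1) ?(ltn_eqF hg') /= ?addbF; last lia.
    by rewrite (negbTE eM) mul1r.
  - by move: hg hg'; rewrite ltnS => hg hg'; move: (leq_ltn_trans hg hg'); rewrite ltnn.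
  - by rewrite hg' subrr mulr0.
by rewrite sumrB s0 subr0 sumr_const_nat subn0 mulr_natl.
Qed.

Lemma Q_sec M c : ~~ odd M -> Q M.+2 c M = c M - c M.+1.
Proof.
move=> eM; rewrite /Q !big_nat_recr //= subrr mulr0 addr0.
rewrite big1_seq ?add0r; last first.
  move=> g; rewrite mem_index_iota => /andP[_ hg].
  rewrite /gadj; have -> : maxn g M = M by lia.
  by rewrite (negbTE eM) (ltn_eqF hg) mul0r.
rewrite /gadj; have -> : maxn M.+1 M = M.+1 by lia.
by rewrite /= (negbTE eM) (gtn_eqF (ltnSn M)) /= mul1r.
Qed.

Lemma Q_main t : forall (c : nat -> algC) b,
  (forall h, (h < t.*2)%N -> Q t.*2 c h = b * c h) ->
  (exists2 h, (h < t.*2)%N & c h != 0) -> exists2 i, (i <= t.*2)%N & b = i%:R.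
Proof.
elim: t => [|t IH] c b hQ [h0 hh0 ch0]; first by rewrite ltn0 in hh0.
have eM : ~~ odd t.*2 by rewrite odd_double.
have [->|b0] := eqVneq b 0; first by exists 0%N.
have s0 : \sum_(0 <= h < t.*2.+2) c h = 0.
  have := Q_sum0 t.*2.+2 c.
  rewrite -doubleS (eq_big_nat _ _ (F2 := fun h => b * c h)); last first.
    by move=> h /andP[_ hh]; rewrite hQ.
  by rewrite -mulr_sumr => /eqP; rewrite mulf_eq0 (negbTE b0) /= => /eqP.
rewrite doubleS in hQ hh0 *.
have [eb|nb] := eqVneq b (t.*2.+2)%:R; first by exists t.*2.+2.
have c1 : c t.*2.+1 = 0.
  have := hQ t.*2.+1 (ltnSn _); rewrite Q_top // => /eqP.
  rewrite -subr_eq0 -mulrBl mulf_eq0 subr_eq0 eq_sym (negbTE nb) /=.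
  by move/eqP.
have [eb1|nb1] := eqVneq b 1; first by exists 1%N.
have c2 : c t.*2 = 0.
  have := hQ t.*2 (ltnW (ltnSn _)); rewrite Q_sec // c1 subr0 => /eqP.
  rewrite -{1}(mul1r (c t.*2)) -subr_eq0 -mulrBl mulf_eq0 subr_eq0 eq_sym (negbTE nb1) /=.
  by move/eqP.
have hh0' : (h0 < t.*2)%N.
  move: hh0; rewrite ltnS leq_eqVlt => /orP[/eqP e|]; first by move: ch0; rewrite e c1 eqxx.
  rewrite ltnS leq_eqVlt => /orP[/eqP e|//]; by move: ch0; rewrite e c2 eqxx.
have [i hi hb1] : exists2 i, (i <= t.*2)%N & b - 1 = i%:R.
  apply: (IH c (b - 1)); last by exists h0.
  move=> h hh; have := hQ h (ltn_trans hh (ltn_trans (ltnSn _) (ltnSn _))).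
  rewrite Q_rec // c1 subr0 => H; apply: (addIr (c h)); by rewrite H mulrBl mul1r subrK.
exists i.+1; first by rewrite ltnS (leq_trans hi) // leqW.
by rewrite -natr1 -hb1 subrK.
Qed.

Lemma Lmul2 k p (F : nat -> algC) (j : 'I_(sumn (nseq k p))) : ~~ odd k -> (0 < p)%N ->
  ((\row_i F (val i)) *m C_laplacian (nseq k p)) 0 j =
  \sum_(0 <= i < k * p) (gadj (i %/ p)%N (j %/ p)%N)%:R * (F j - F i).
Proof.
move=> ek p0; have hN : sumn (nseq k p) = (k * p)%N by rewrite sumn_nseq mulnC.
rewrite Lmul /C_adj rev_nseq.
rewrite -(big_mkord xpredT (fun i => (Cadj (nseq k p) i j)%:R * (F j - F i))).
have hj : (j < k * p)%N by rewrite -hN ltn_ord.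
rewrite [in X in \sum_(0 <= i < X) _]hN.
apply: eq_big_nat => i /andP[_ hi].
have [->|nij] := eqVneq i j; first by rewrite !subrr !mulr0.
rewrite Cadj_char // nij /=.
have hM : (maxn (i %/ p) (j %/ p) <= k)%N.
  by rewrite geq_max; apply/andP; split; apply: ltnW; rewrite ltn_divLR.
by rewrite oddB // (negbTE ek) /=.
Qed.

Lemma sum_block k p (f : nat -> algC) :
  \sum_(0 <= i < k * p) f i = \sum_(0 <= g < k) \sum_(0 <= r < p) f (g * p + r)%N.
Proof.
elim: k => [|k IH]; first by rewrite mul0n !big_geq.
rewrite big_nat_recr //= -IH mulSnr (big_cat_nat _ (n := (k * p)%N)) ?leq_addr //=.
congr (_ + _).
rewrite -{1}(add0n (k * p)%N) big_addn addKn.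
by apply: eq_bigr => r _; rewrite addnC.
Qed.

Lemma Lmul_const k p (c : nat -> algC) (j : 'I_(sumn (nseq k p))) : ~~ odd k -> (0 < p)%N ->
  ((\row_i c (val i %/ p)%N) *m C_laplacian (nseq k p)) 0 j =
  p%:R * \sum_(0 <= g < k) (gadj g (j %/ p)%N)%:R * (c (j %/ p)%N - c g).
Proof.
move=> ek p0; rewrite (Lmul2 (fun i => c (i %/ p)%N)) // sum_block mulr_sumr.
apply: eq_bigr => g _.
rewrite (eq_big_nat _ _ (F2 := fun r => (gadj g (j %/ p)%N)%:R * (c (j %/ p)%N - c g))).
  by rewrite sumr_const_nat subn0 [RHS]mulr_natl.
by move=> r /andP[_ hr]; rewrite divnMDl // divn_small ?addn0.
Qed.

Lemma count_odd n : (\sum_(0 <= g < n) odd g)%N = n./2.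
Proof.
elim: n => [|n IH]; first by rewrite big_geq.
rewrite big_nat_recr //= IH; lia.
Qed.

Lemma count_odd_from a n : (a <= n)%N -> (\sum_(a <= g < n) odd g)%N = (n./2 - a./2)%N.
Proof.
move=> han; have := count_odd n; rewrite (big_cat_nat _ (n := a)) //= count_odd; lia.
Qed.

Lemma sum_nat0 m n (F : nat -> algC) : (forall i, (m <= i < n)%N -> F i = 0) ->
  \sum_(m <= i < n) F i = 0.
Proof. by move=> H; rewrite big1_seq // => i; rewrite mem_index_iota => /H. Qed.

Lemma sum_delta n m (x : nat -> algC) : (m < n)%N ->
  \sum_(0 <= i < n) (i == m)%:R * x i = x m.
Proof.
move=> hm; rewrite (bigD1_seq m) ?mem_index_iota ?iota_uniq //= eqxx mul1r.
rewrite big1 ?addr0 // => i /negbTE ->; by rewrite mul0r.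
Qed.

Lemma gadj_gt g h : (h < g)%N -> gadj g h = odd g.
Proof. move=> hg; rewrite /gadj (gtn_eqF hg) addbF; congr odd; lia. Qed.

Lemma gadj_lt g h : (g < h)%N -> gadj g h = odd h.
Proof. move=> hg; rewrite /gadj (ltn_eqF hg) addbF; congr odd; lia. Qed.

Definition Dc (l' : nat) (g : nat) : algC :=
  if (g < l')%N then -1 else if g == l' then l'%:R else 0.

Lemma Dvec k l' h : (0 < l')%N -> (l' < k)%N -> (h < k)%N ->
  Q k (Dc l') h = (odd l' * l'.+1 + (k./2 - l'.+1./2))%:R * Dc l' h.
Proof.
move=> l0 lk hk.
rewrite /Q (big_cat_nat _ (n := l')) //=; last by apply: ltnW.
rewrite (big_cat_nat _ (m := l') (n := l'.+1)) //= big_nat1.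
have hodd : \sum_(l'.+1 <= g < k) ((odd g)%:R : algC) = ((k./2 - l'.+1./2)%N)%:R.
  by rewrite -count_odd_from // natr_sum.
have Dl : Dc l' l' = l'%:R by rewrite /Dc ltnn eqxx.
have Dgt : forall g, (l' < g)%N -> Dc l' g = 0.
  by move=> g hg; rewrite /Dc ltnNge (ltnW hg) /= (gtn_eqF hg).
have Dlt : forall g, (g < l')%N -> Dc l' g = -1 by move=> g hg; rewrite /Dc hg.
rewrite natrD natrM -hodd.
case: (ltngtP h l') => hl.
- rewrite (Dlt h hl) (@sum_nat0 0 l'); last by move=> g /andP[_ hg]; rewrite (Dlt g hg) subrr mulr0.
  rewrite (gadj_gt hl) Dl.
  rewrite (eq_big_nat _ _ (F2 := fun g => (odd g)%:R * (-1 : algC))); last first.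
    move=> g /andP[hg _]; rewrite gadj_gt ?Dgt //; last by apply: ltn_trans hg.
    by rewrite subr0.
  rewrite -mulr_suml -natr1; ring.
- rewrite (Dgt h hl) mulr0 (@sum_nat0 l'.+1 k) ?addr0; last first.
    by move=> g /andP[hg _]; rewrite (Dgt g hg) subrr mulr0.
  rewrite (gadj_lt hl) Dl sub0r.
  rewrite (eq_big_nat _ _ (F2 := fun g => (odd h)%:R * (1 : algC))); last first.
    by move=> g /andP[_ hg]; rewrite gadj_lt ?(Dlt g hg) ?sub0r ?opprK // (ltn_trans hg hl).
  rewrite sumr_const_nat subn0 mulr1 -mulr_natr; ring.
- rewrite hl Dl subrr mulr0 add0r.
  rewrite (eq_big_nat _ _ (F2 := fun g => (odd l')%:R * (l'%:R + 1 : algC))); last first.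
    by move=> g /andP[_ hg]; rewrite gadj_lt // Dlt // opprK.
  rewrite (eq_big_nat (m := l'.+1) _ _ (F2 := fun g => (odd g)%:R * (l'%:R : algC))); last first.
    by move=> g /andP[hg _]; rewrite gadj_gt // Dgt // subr0.
  rewrite -mulr_suml sumr_const_nat subn0 -natr1 -[(_ *+ l')]mulr_natr -mulr_suml; ring.
Qed.

Lemma ord_hp k p h : (0 < p)%N -> (h < k)%N -> (h * p < sumn (nseq k p))%N.
Proof. move=> p0 hk; by rewrite sumn_nseq [(p * k)%N]mulnC ltn_pmul2r. Qed.

Lemma eig_const k p (c : nat -> algC) (b : nat) : ~~ odd k -> (0 < p)%N ->
  (forall h, (h < k)%N -> Q k c h = b%:R * c h) -> (exists2 h, (h < k)%N & c h != 0) ->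
  eigenvalue (C_laplacian (nseq k p)) (b * p)%:R.
Proof.
move=> ek p0 hQ [h hk ch].
apply/eigenvalueP; exists (\row_i c (val i %/ p)%N).
  apply/rowP => j; rewrite Lmul_const // !mxE.
  have hj : (j %/ p < k)%N by rewrite ltn_divLR // mulnC -sumn_nseq ltn_ord.
  have := hQ _ hj; rewrite /Q => ->; rewrite natrM; ring.
apply/negP => /eqP H.
have := congr1 (fun M : 'rV_(sumn (nseq k p)) => M 0 (Ordinal (ord_hp p0 hk))) H.
by rewrite !mxE /= mulnK // => E; move: ch; rewrite E eqxx.
Qed.

Lemma cnt1 k : (1 < k)%N -> (\sum_(0 <= g < k) gadj g 1)%N = k./2.
Proof.
move=> hk; rewrite -count_odd big_ltn ?(ltn_trans _ hk) // big_ltn //.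
rewrite [RHS]big_ltn ?(ltn_trans _ hk) // [in RHS]big_ltn //=.
congr (_ + (_ + _))%N; apply: eq_big_nat => g /andP[hg _]; by rewrite gadj_gt.
Qed.

Lemma sumG k p h : (0 < p)%N -> \sum_(0 <= i < k * p) ((gadj (i %/ p) h)%:R : algC) =
  (p * \sum_(0 <= g < k) gadj g h)%N%:R.
Proof.
move=> p0; rewrite sum_block natrM natr_sum mulr_sumr; apply: eq_bigr => g _.
rewrite (eq_big_nat _ _ (F2 := fun r => ((gadj g h)%:R : algC))).
  by rewrite sumr_const_nat subn0 mulr_natl.
by move=> r /andP[_ hr]; rewrite divnMDl // divn_small // addn0.
Qed.

Lemma eig_internal k p : ~~ odd k -> (1 < k)%N -> (1 < p)%N ->
  eigenvalue (C_laplacian (nseq k p)) (k./2 * p)%:R.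
Proof.
move=> ek hk hp; have p0 : (0 < p)%N by apply: ltnW.
pose F i : algC := (i == p)%:R - (i == p.+1)%:R.
have hp1 : (p.+1 < k * p)%N by nia.
have e1 : (p %/ p = 1)%N by rewrite divnn p0.
have e2 : (p.+1 %/ p = 1)%N by rewrite -addn1 divnDl ?dvdnn // e1 divn_small.
apply/eigenvalueP; exists (\row_i F (val i)).
  apply/rowP => j; rewrite Lmul2 // !mxE.
  under eq_bigr => i _ do rewrite mulrBr.
  rewrite sumrB -mulr_suml.
  have -> : \sum_(0 <= i < k * p) (gadj (i %/ p) (j %/ p))%:R * F i = 0.
    rewrite /F; under eq_bigr => i _ do rewrite mulrBr.
    rewrite sumrB.
    under eq_bigr => i _ do rewrite mulrC.
    rewrite sum_delta; last exact: ltn_trans hp1.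
    under eq_bigr => i _ do rewrite mulrC.
    by rewrite sum_delta // e1 e2 subrr.
  rewrite subr0 sumG //.
  have [eq1|n1] := eqVneq (j %/ p)%N 1%N.
    by rewrite eq1 cnt1 // mulnC.
  have -> : F j = 0.
    rewrite /F; have -> : (j == p :> nat) = false.
      by apply/negP => /eqP e; move: n1; rewrite e e1.
    have -> : (j == p.+1 :> nat) = false.
      by apply/negP => /eqP e; move: n1; rewrite e e2.
    by rewrite subrr.
  by rewrite !mulr0.
apply/negP => /eqP H.
have := congr1 (fun M : 'rV_(sumn (nseq k p)) => M 0 (Ordinal (ord_hp p0 hk))) H.
rewrite !mxE /= mul1n /F eqxx (ltn_eqF (ltnSn p)) subr0 => /eqP.
by rewrite oner_eq0.
Qed.

Lemma cnt_le k h : (\sum_(0 <= g < k) gadj g h <= k)%N.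
Proof.
apply: (@leq_trans (\sum_(0 <= g < k) 1)%N); first by apply: leq_sum => g _; apply: leq_b1.
by rewrite sum_nat_const_nat subn0 muln1.
Qed.

Lemma eig_in k p a : ~~ odd k -> (0 < p)%N ->
  eigenvalue (C_laplacian (nseq k p)) a -> exists2 i, (i <= k)%N & a = (i * p)%:R.
Proof.
move=> ek p0 /eigenvalueP [v hv nz].
pose F (i : nat) : algC := if insub i is Some j then v 0 j else 0.
have FE : forall j : 'I_(sumn (nseq k p)), F j = v 0 j by move=> j; rewrite /F valK.
have vE : v = \row_i F (val i) by apply/rowP => j; rewrite mxE FE.
have Eq : forall j : 'I_(sumn (nseq k p)), ((\row_i F (val i)) *m C_laplacian (nseq k p)) 0 j = a * F j.
  by move=> j; rewrite -vE hv mxE FE.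
have pn0 : (p%:R : algC) != 0 by rewrite pnatr_eq0 -lt0n.
case: (boolP [exists u : 'I_(sumn (nseq k p)), exists w : 'I_(sumn (nseq k p)),
          ((u %/ p)%N == (w %/ p)%N) && (v 0 u != v 0 w)]).
  case/existsP => u /existsP [w /andP [/eqP hg hne]].
  have Eu := Eq u; have Ew := Eq w.
  rewrite Lmul2 // hg in Eu; rewrite Lmul2 // in Ew.
  have : (a - (p * \sum_(0 <= g < k) gadj g (w %/ p))%N%:R) * (F u - F w) = 0.
    have key : a * F u - a * F w = (\sum_(0 <= i < k * p) ((gadj (i %/ p) (w %/ p))%:R : algC)) * (F u - F w).
      by rewrite -Eu -Ew -sumrB mulr_suml; apply: eq_bigr => i _; ring.
    rewrite sumG // in key; rewrite mulrBl -key; ring.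
  move/eqP; rewrite mulf_eq0 subr_eq0 [F u - _ == 0]subr_eq0 !FE (negbTE hne) orbF => /eqP ->.
  by exists (\sum_(0 <= g < k) gadj g (w %/ p))%N; rewrite ?cnt_le // mulnC.
move/existsPn => H.
have H' : forall u w : 'I_(sumn (nseq k p)), (u %/ p)%N = (w %/ p)%N -> v 0 u = v 0 w.
  move=> u w e; have := H u; move/existsPn/(_ w); rewrite e eqxx /= negbK.
  by move/eqP.
pose c (g : nat) := F (g * p)%N.
have hjk : forall j : 'I_(sumn (nseq k p)), (j %/ p < k)%N.
  by move=> j; rewrite ltn_divLR // mulnC -sumn_nseq ltn_ord.
have FC : forall j : 'I_(sumn (nseq k p)), F j = c (j %/ p)%N.
  move=> j; rewrite /c (FE j).
  have := FE (Ordinal (ord_hp p0 (hjk j))); rewrite /= => ->.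
  by apply: H'; rewrite /= mulnK.
have vE2 : v = \row_i c (val i %/ p)%N by rewrite vE; apply/rowP => j; rewrite !mxE FC.
have hQ : forall h, (h < k)%N -> Q k c h = (a / p%:R) * c h.
  move=> h hk; have := Eq (Ordinal (ord_hp p0 hk)).
  rewrite -vE vE2 Lmul_const //= mulnK // -/(Q k c h) -/(c h) => e.
  by rewrite mulrAC -e mulrC mulKf.
have [h hk ch] : exists2 h, (h < k)%N & c h != 0.
  case: (boolP [exists j, v 0 j != 0]).
    by case/existsP => j hj; exists (j %/ p)%N; rewrite ?hjk // -FC FE.
  move/existsPn => Z; move: nz; rewrite (_ : v = 0) ?eqxx //.
  by apply/rowP => j; rewrite mxE; move: (Z j); rewrite negbK => /eqP.
have ek2 : ((k./2).*2 = k)%N by rewrite halfK (negbTE ek) subn0.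
have := @Q_main (k./2) c (a / p%:R); rewrite ek2 => /(_ hQ).
case; first by exists h.
move=> i hi e; exists i => //.
by rewrite natrM -e divfK.
Qed.

Lemma eig_all k p i : ~~ odd k -> (1 < k)%N -> (1 < p)%N -> (i <= k)%N ->
  eigenvalue (C_laplacian (nseq k p)) (i * p)%:R.
Proof.
move=> ek hk hp hi; have p0 : (0 < p)%N by apply: ltnW.
have k0 : (0 < k)%N by apply: ltnW.
have [->|i0] := eqVneq i 0%N.
  apply: (@eig_const k p (fun _ => 1) 0) => //; last by exists 0%N; rewrite ?oner_eq0.
  move=> h _; rewrite mul0r /Q; apply: sum_nat0 => g _; by rewrite subrr mulr0.
have [->|it] := eqVneq i k./2; first exact: eig_internal.
have Dc0 : forall l', (0 < l')%N -> Dc l' 0 != 0.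
  by move=> l' l0; rewrite /Dc l0 oppr_eq0 oner_eq0.
case: (ltnP k./2 i) => hit.
- pose l' := (2 * i - k - 1)%N.
  have l0 : (0 < l')%N by rewrite /l'; lia.
  have lk : (l' < k)%N by rewrite /l'; lia.
  have -> : i = (odd l' * l'.+1 + (k./2 - l'.+1./2))%N.
    have ol : odd l' by rewrite /l'; move: ek; lia.
    rewrite ol /l'; move: ek; lia.
  apply: (@eig_const k p (Dc l')) => //; last by exists 0%N => //; apply: Dc0.
  by move=> h hh; rewrite Dvec.
- pose l' := (k - 2 * i)%N.
  have l0 : (0 < l')%N by rewrite /l'; lia.
  have lk : (l' < k)%N by rewrite /l'; lia.
  have -> : i = (odd l' * l'.+1 + (k./2 - l'.+1./2))%N.
    have ol : odd l' = false by rewrite /l'; move: ek; lia.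
    rewrite ol /l'; move: ek; lia.
  apply: (@eig_const k p (Dc l')) => //; last by exists 0%N => //; apply: Dc0.
  by move=> h hh; rewrite Dvec.
Qed.

Local Close Scope ring_scope.
Unset Implicit Arguments.

Theorem theorem3p2 (k p : nat) (hk : 2 <= k) (hkeven : ~~ odd k) (hp : 2 <= p) :
  num_distinct_eigenvalues (C_laplacian (nseq k p)) k.+1.
Proof.
have p0 : 0 < p by apply: ltnW.
exists [seq ((i * p)%:R : algC)%R | i <- iota 0 k.+1]; split.
- rewrite map_inj_in_uniq ?iota_uniq // => x y _ _ /eqP.
  by rewrite eqr_nat eqn_pmul2r // => /eqP.
- move=> a; apply/idP/idP.
    case/eig_in => // i hi ->; apply/mapP; exists i => //.
    by rewrite mem_iota add0n ltnS.
  case/mapP => i; rewrite mem_iota add0n ltnS => /andP[_ hi] ->.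
  exact: eig_all.
- by rewrite size_map size_iota.
Qed.
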